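(* Let $s,k$ be positive integers and let $n\ge3(s+1)k-1$. Let $\mathcal F\subset\binom{[n]}{k}$ be a family such that for every $A\in\mathcal F$ there is a positive integer $\ell$ with $|A\cap[3(s+1)\ell-1]|\ge\ell$. Then $$(3s+2)\,|\partial\mathcal F|\ge|\mathcal F|.$$
   Context: $[m]=\{1,\ldots,m\}$; $\binom{X}{k}$ is the family of all $k$-subsets of $X$. For $\mathcal F\subset\binom{[n]}{k}$, its (lower) shadow is $\partial\mathcal F:=\bigcup_{F\in\mathcal F}\binom{F}{k-1}$. *)

(* Defs.v *)
From mathcomp Require Import all_boot.
Set Implicit Arguments. Unset Strict Implicit. Unset Printing Implicit Defensive.

(* Ground set [n] = {1,...,n} is modelled by 'I_n, the ordinal i standing for i+1. *)

Definition binom (T : finType) (X : {set T}) (k : nat) : {set {set T}} :=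
  [set B in powerset X | #|B| == k].

Definition shadow (n k : nat) (FF : {set {set 'I_n}}) : {set {set 'I_n}} :=
  \bigcup_(F in FF) binom F k.-1.

Definition initseg (n m : nat) : {set 'I_n} := [set i : 'I_n | i.+1 <= m].

(* Main.v *)
Require Import Defs.
From mathcomp Require Import all_boot.
Set Implicit Arguments. Unset Strict Implicit. Unset Printing Implicit Defensive.

Lemma card_binom (T : finType) (A : {set T}) j : #|binom A j| = 'C(#|A|, j).
Proof.
rewrite -cards_draws; apply: eq_card => B; by rewrite !inE.
Qed.

Lemma sum_ind (T : finType) (S X : {set T}) :
  X \subset S -> \sum_(B in S) (B \in X) = #|X|.
Proof.
move=> XS; rewrite -sum1_card (big_setID X) /= (setIidPr XS).
rewrite [X in _ + X = _]big1 ?addn0; last by move=> i; rewrite !inE => /andP[/negbTE ->].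
by apply: eq_bigr => i ->.
Qed.

Lemma card_lt (N m : nat) : #|[set i : 'I_N | i < m]| <= m.
Proof.
have -> : m = size (iota 0 m) by rewrite size_iota.
rewrite cardE -(size_map val).
apply: uniq_leq_size; first by rewrite map_inj_uniq ?enum_uniq //; exact: val_inj.
move=> x /mapP[i]; rewrite mem_enum inE size_iota => im ->; by rewrite mem_iota.
Qed.

Lemma lym N m k (F : {set {set 'I_N}}) : 0 < k ->
  (forall A, A \in F -> #|A| = k /\ (forall i, i \in A -> i < m)) ->
  k * #|F| <= (m - k.-1) * #|shadow k F|.
Proof.
move=> k0 HF.
have E1 : \sum_(A in F) #|binom A k.-1| = #|F| * k.
  rewrite -sum_nat_const; apply: eq_bigr => A /HF [cA _].
  by rewrite card_binom cA -subn1 bin_sub // bin1.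
have E2 : \sum_(A in F) #|binom A k.-1| =
    \sum_(A in F) \sum_(B in shadow k F) (B \in binom A k.-1).
  apply: eq_bigr => A AF; rewrite sum_ind //.
  exact: (bigcup_sup _ AF).
rewrite mulnC -E1 E2 exchange_big /= mulnC -sum_nat_const.
apply: leq_sum => B /bigcupP [A0 A0F]; rewrite inE powersetE => /andP [BA0 /eqP cB].
pose U := [set i : 'I_N | i < m].
have BU : B \subset U.
  apply/subsetP => y yB; rewrite inE; apply: (proj2 (HF _ A0F)).
  exact: (subsetP BA0).
pose X := [set A in F | B \in binom A k.-1].
have -> : \sum_(A in F) (B \in binom A k.-1) = \sum_(A in F) (A \in X).
  by apply: eq_bigr => A AF; rewrite /X inE; move: AF; rewrite -topredE /= => ->.
rewrite sum_ind; last by apply/subsetP => A; rewrite inE => /andP [].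
apply: (@leq_trans #|(fun i => i |: B) @: (U :\: B)|).
  apply: subset_leq_card; apply/subsetP => A; rewrite !inE.
  move=> /andP [AF /andP [BA /eqP cB']].
  have [cA HA] := HF _ AF.
  have : #|A :\: B| == 1.
    rewrite cardsD (setIidPr BA) cA cB'; apply/eqP.
    by clear -k0; case: k k0 => // k' _; rewrite /= subSn // subnn.
  move/cards1P => [i Ei].
  have iA : i \in A :\: B by rewrite Ei inE.
  apply/imsetP; exists i.
    rewrite inE; move: iA; rewrite inE => /andP [-> iA] /=.
    rewrite inE; exact: HA.
  apply/setP => y; rewrite !inE.
  case yB: (y \in B); first by rewrite orbT (subsetP BA).
  rewrite orbF; apply/idP/idP => [yA | /eqP ->]; last by move: iA; rewrite inE => /andP [].
  have : y \in A :\: B by rewrite inE yB yA.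
  by rewrite Ei inE.
apply: (leq_trans (leq_imset_card _ _)).
rewrite cardsD (setIidPr BU) cB; apply: leq_sub2r; exact: card_lt.
Qed.

From mathcomp Require Import zify.

Definition valid N s (A : {set 'I_N}) :=
  exists l, 0 < l /\ l <= #|A :&: initseg N (3 * (s + 1) * l - 1)|.
Arguments valid {N} s A.

Lemma valid_le N s (A : {set 'I_N}) l :
  l <= #|A :&: initseg N (3 * (s + 1) * l - 1)| -> l <= #|A|.
Proof. move=> H; apply: (leq_trans H); apply: subset_leq_card; exact: subsetIl. Qed.

Lemma lym_case s N m k (F : {set {set 'I_N}}) :
  m <= 3 * (s + 1) * k - 1 ->
  (forall A, A \in F -> [/\ #|A| = k, (forall i, i \in A -> i < m) & valid s A]) ->
  #|F| <= (3 * s + 2) * #|shadow k F|.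
Proof.
move=> mk HF.
case: (set_0Vmem F) => [-> | [A0 A0F]]; first by rewrite cards0.
have k0 : 0 < k.
  have [cA _ [l [l0 hl]]] := HF _ A0F.
  rewrite -cA; exact: (leq_trans l0 (valid_le hl)).
have := @lym N m k F k0 (fun A AF => let: And3 a b _ := HF A AF in conj a b).
move=> H; rewrite -(leq_pmul2l k0); apply: (leq_trans H).
rewrite mulnA [k * _]mulnC leq_mul2r; apply/orP; right.
lia.
Qed.

Lemma main s N m : forall k (F : {set {set 'I_N}}),
  (forall A, A \in F -> [/\ #|A| = k, (forall i, i \in A -> i < m) & valid s A]) ->
  #|F| <= (3 * s + 2) * #|shadow k F|.
Proof.
elim: m => [|m IH] k F HF; first exact: (@lym_case s N 0).
case: (leqP m.+1 (3 * (s + 1) * k - 1)) => [mk | km]; first exact: (lym_case mk).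
case: (ltnP m N) => [mN | Nm]; last first.
  apply: IH => A AF; have [a b c] := HF A AF; split => // i _.
  exact: (leq_trans (ltn_ord i) Nm).
pose x := Ordinal mN.
have xout : forall A, A \in F -> forall l, l <= #|A :&: initseg N (3 * (s + 1) * l - 1)| ->
    x \notin initseg N (3 * (s + 1) * l - 1).
  move=> A AF l hl; have [cA _ _] := HF A AF.
  have lk : l <= k by rewrite -cA; exact: valid_le hl.
  rewrite inE /= -ltnNge.
  have : 3 * (s + 1) * l <= 3 * (s + 1) * k by rewrite leq_mul2l lk orbT.
  lia.
pose P := [set A : {set 'I_N} | x \in A].
pose F0 := F :\: P.
pose FX := F :&: P.
pose F1 := (fun A => A :\ x) @: FX.
have cF : #|F| = #|F1| + #|F0|.
  rewrite -(cardsID P F) card_in_imset // => A B.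
  rewrite !inE => /andP [_ xA] /andP [_ xB] E.
  by rewrite -(setD1K xA) -(setD1K xB) E.
have ltm : forall A, A \in F -> forall i, i \in A -> i != x -> i < m.
  move=> A AF i iA ix; have [_ H _] := HF A AF.
  have := H i iA; rewrite ltnS leq_eqVlt => /orP [/eqP e|//].
  by case/eqP: ix; apply: val_inj.
have H0 : #|F0| <= (3 * s + 2) * #|shadow k F0|.
  apply: IH => A; rewrite !inE => /andP [xA AF].
  have [a b c] := HF A AF; split => // i iA; apply: (ltm _ AF _ iA).
  by apply: contraNneq xA => <-.
have HF1 : forall G, G \in F1 -> exists2 A, A \in FX & G = A :\ x.
  by move=> G /imsetP.
have HF1v : forall G, G \in F1 ->
    [/\ #|G| = k.-1, (forall i, i \in G -> i < m) & valid s G].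
  move=> G /HF1 [A]; rewrite !inE => /andP [AF xA] ->.
  have [cA _ [l [l0 hl]]] := HF A AF.
  split.
  - by rewrite (cardsD1 x A) xA in cA; rewrite -cA.
  - move=> i; rewrite !inE => /andP [ix iA]; exact: ltm AF i iA ix.
  - exists l; split => //; apply: (leq_trans hl); apply: subset_leq_card.
    have xo := xout A AF l hl.
    apply/subsetP => y; rewrite inE => /andP [yA yI].
    rewrite inE yI andbT inE yA andbT.
    by rewrite inE; apply: contraNneq xo => <-.
have H1 : #|F1| <= (3 * s + 2) * #|shadow k.-1 F1| by apply: IH.
have k2 : F1 != set0 -> 0 < k.-1.
  case/set0Pn => G /HF1v [cG _ [l [l0 hl]]].
  by rewrite -cG; exact: (leq_trans l0 (valid_le hl)).
pose S1 := (fun B => x |: B) @: shadow k.-1 F1.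
have xS1 : forall B, B \in shadow k.-1 F1 -> x \notin B.
  move=> B /bigcupP [G /HF1 [A _ ->]]; rewrite inE => /andP [BG _].
  by rewrite powersetE in BG; apply/negP => /(subsetP BG); rewrite !inE eqxx.
have cS1 : #|S1| = #|shadow k.-1 F1|.
  apply: card_in_imset => B B' hB hB' E.
  by rewrite -(setU1K (xS1 _ hB)) -(setU1K (xS1 _ hB')) E.
have sub0 : shadow k F0 \subset shadow k F.
  apply/subsetP => B /bigcupP [A AF0 hB].
  have AF : A \in F by move: AF0; rewrite inE => /andP [].
  exact: (subsetP (bigcup_sup A AF)).
have sub1 : S1 \subset shadow k F.
  apply/subsetP => B' /imsetP [B hB ->].
  have := hB; move=> /bigcupP [G GF1]; rewrite inE => /andP [BG cB].
  rewrite powersetE in BG.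
  have [A AX EG] := HF1 G GF1.
  move: AX; rewrite !inE => /andP [AF xA].
  apply: (subsetP (bigcup_sup A AF)); rewrite !inE; apply/andP; split.
    apply/subsetP => y; rewrite !inE => /orP [/eqP -> // | yB].
    by move: (subsetP BG y yB); rewrite EG !inE => /andP [].
  have kk : 0 < k.-1 by apply: k2; apply/set0Pn; exists G.
  rewrite cardsU1 (xS1 _ hB) (eqP cB) /=; apply/eqP; lia.
have dis : shadow k F0 :&: S1 = set0.
  apply/setP => B; rewrite !inE; apply/negP => /andP [/bigcupP [A]].
  rewrite !inE => /andP [xA _] /andP [BA _] /imsetP [B0 _ E].
  by move: xA; rewrite (subsetP BA) // E !inE eqxx.
have cU : #|shadow k F0| + #|S1| <= #|shadow k F|.
  rewrite -cardsUI dis cards0 addn0; apply: subset_leq_card.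
  by rewrite subUset sub0 sub1.
rewrite cF; apply: (leq_trans (leq_add H1 H0)).
rewrite -mulnDr leq_mul2l -cS1; apply/orP; right; rewrite addnC; exact: cU.
Qed.

Theorem lemma4 (s k n : nat) (FF : {set {set 'I_n}}) :
  0 < s -> 0 < k -> 3 * (s + 1) * k - 1 <= n ->
  FF \subset binom [set: 'I_n] k ->
  (forall A, A \in FF -> exists l : nat,
       0 < l /\ l <= #|A :&: initseg n (3 * (s + 1) * l - 1)|) ->
  #|FF| <= (3 * s + 2) * #|shadow k FF|.
Proof.
move=> _ _ _ sub HV; apply: (@main s n n) => A AF; split.
- by move: (subsetP sub A AF); rewrite inE => /andP [_ /eqP].
- by move=> i _; exact: ltn_ord.
- exact: HV.
Qed.
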